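(* Consider the following two-party game. Alice and Bob share a two-qubit state $\rho$ on $\mathbb{C}^2\otimes\mathbb{C}^2$. For each $x=x_1x_2x_3\in\{0,1\}^3$, Alice applies a completely positive trace-preserving map $\Lambda_x$ to her qubit (the first tensor factor), producing $\rho_x=(\Lambda_x\otimes\mathrm{id})(\rho)$, and sends her qubit to Bob. For each $y\in\{1,2,3\}$, Bob performs a two-outcome projective measurement $\{\Pi_y^0,\Pi_y^1\}$ on the two-qubit system, with observable $B_y=\Pi_y^0-\Pi_y^1$. The success probability is $$\mathcal{S}_Q=\frac{1}{24}\sum_{y=1}^{3}\sum_{x\in\{0,1\}^3}\mathrm{Tr}\big[\rho_x\,\Pi_y^{x_y}\big],$$ whose optimal quantum value is $\mathcal{S}_Q^{opt}=\frac12+\frac{1}{\sqrt6}$. Define the operators $$M_1=-\rho_{000}-\rho_{011}+\rho_{101}+\rho_{110},\quad M_2=-\rho_{000}+\rho_{011}-\rho_{101}+\rho_{110},\quad M_3=-\rho_{000}+\rho_{011}+\rho_{101}-\rho_{110},$$ $$N_1=\rho_{001}+\rho_{010}-\rho_{100}-\rho_{111},\quad N_2=\rho_{001}-\rho_{010}+\rho_{100}-\rho_{111},\quad N_3=-\rho_{001}+\rho_{010}+\rho_{100}-\rho_{111}.$$ If $\mathcal{S}_Q=\mathcal{S}_Q^{opt}$, then: (i) the four states $\{\rho_x: x_1\oplus x_2\oplus x_3=0\}$ are mutually orthogonal and sum to $\mathbb{1}_2\otimes\mathbb{1}_2$, and likewise the four states $\{\rho_x: x_1\oplus x_2\oplus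 x_3=1\}$ are mutually orthogonal and sum to $\mathbb{1}_2\otimes\mathbb{1}_2$; (ii) for every $x\in\{0,1\}^3$, $\mathrm{Tr}[\rho_x\rho_{\bar x}]=0$, where $\bar x$ is the bitwise complement of $x$, and $\mathrm{Tr}[\rho_x\rho_{x'}]=\frac13$ for all $x,x'$ with $x_1\oplus x_2\oplus x_3\neq x'_1\oplus x'_2\oplus x'_3$ and $x'\neq\bar x$; (iii) Bob's observables satisfy $B_y=\sqrt{\tfrac{3}{8}}\,(N_y-M_y)$ for all $y\in\{1,2,3\}$.
   Context: $\oplus$ denotes addition modulo 2. The game is the ''3-bit variant of prepare-measure random access code'', in which Bob on input $y$ should output $x_y$. *)

(* Defs.v *)
(* Complex numbers are modelled as R[i] for an arbitrary
   real closed field R (mathcomp-real-closed); R = the reals gives C. *)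
From HB Require Import structures.
From mathcomp Require Import all_boot all_order all_algebra.
From mathcomp.real_closed Require Import complex mxtens.
Set Implicit Arguments. Unset Strict Implicit. Unset Printing Implicit Defensive.
Import Order.TTheory GRing.Theory Num.Theory.
Local Open Scope ring_scope.

Section QDefs.
Variable R : rcfType.
Local Notation C := R[i].

Definition adjmx {m n} (A : 'M[C]_(m, n)) : 'M[C]_(n, m) := (map_mx Num.conj A)^T.

Definition psd {n} (A : 'M[C]_n) : Prop :=
  adjmx A = A /\ forall v : 'cV[C]_n, 0 <= (adjmx v *m A *m v) 0 0.

Definition density {n} (A : 'M[C]_n) : Prop := psd A /\ \tr A = 1.

(* (L ⊗ id_n) acting on 'M_(2 * n), first tensor factor = the qubit *)
Definition tens_id (n : nat) (L : 'M[C]_2 -> 'M[C]_2) (X : 'M[C]_(2 * n))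
  : 'M[C]_(2 * n) :=
  \sum_(k < n) \sum_(l < n)
    (L (\matrix_(i, j) X (mxtens_index (i, k)) (mxtens_index (j, l))))
      *t (delta_mx k l : 'M[C]_n).

Definition completely_positive (L : 'M[C]_2 -> 'M[C]_2) : Prop :=
  forall (n : nat) (X : 'M[C]_(2 * n)), psd X -> psd (tens_id L X).

Definition trace_preserving (L : 'M[C]_2 -> 'M[C]_2) : Prop :=
  forall X : 'M[C]_2, \tr (L X) = \tr X.

Definition CPTP (L : {linear 'M[C]_2 -> 'M[C]_2}) : Prop :=
  completely_positive L /\ trace_preserving L.

Definition proj_meas {n} (P0 P1 : 'M[C]_n) : Prop :=
  [/\ adjmx P0 = P0, P0 *m P0 = P0, adjmx P1 = P1, P1 *m P1 = P1
    & P0 + P1 = 1%:M].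

End QDefs.

(* bit strings x = x1 x2 x3; index y : 'I_3 with y = 0,1,2 <-> paper's 1,2,3 *)
Definition bits := {ffun 'I_3 -> bool}.
Definition b3 (a b c : bool) : bits := [ffun i : 'I_3 => nth false [:: a; b; c] i].
Definition parity (x : bits) : bool := \big[addb/false]_(i < 3) x i.
Definition compl (x : bits) : bits := [ffun i => ~~ x i].

Section Game.
Variable R : rcfType.
Local Notation C := R[i].

(* success probability S_Q; bit false = outcome 0 *)
Definition success (r : bits -> 'M[C]_(2 * 2)) (Pi : 'I_3 -> bool -> 'M[C]_(2 * 2)) : C :=
  24^-1 * \sum_(y < 3) \sum_(x : bits) \tr (r x *m Pi y (x y)).

Definition Mop (r : bits -> 'M[C]_(2 * 2)) (y : 'I_3) : 'M[C]_(2 * 2) :=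
  let r000 := r (b3 false false false) in let r011 := r (b3 false true true) in
  let r101 := r (b3 true false true) in let r110 := r (b3 true true false) in
  match val y with
  | 0 => - r000 - r011 + r101 + r110
  | 1 => - r000 + r011 - r101 + r110
  | _ => - r000 + r011 + r101 - r110
  end.

Definition Nop (r : bits -> 'M[C]_(2 * 2)) (y : 'I_3) : 'M[C]_(2 * 2) :=
  let r001 := r (b3 false false true) in let r010 := r (b3 false true false) in
  let r100 := r (b3 true false false) in let r111 := r (b3 true true true) in
  match val y with
  | 0 => r001 + r010 - r100 - r111
  | 1 => r001 - r010 + r100 - r111
  | _ => - r001 + r010 + r100 - r111
  end.

End Game.

(* Main.v *)
Require Import Defs.
From HB Require Import structures.
From mathcomp Require Import all_boot all_order all_algebra.
From mathcomp.real_closed Require Import complex mxtens.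
From mathcomp Require Import spectral sesquilinear.
From mathcomp Require Import ring.
Set Implicit Arguments. Unset Strict Implicit. Unset Printing Implicit Defensive.
Import Order.TTheory GRing.Theory Num.Theory.
Local Open Scope ring_scope.

Section LA.
Variable R : rcfType.
Local Notation C := R[i].

Lemma adjmxM m n p (A : 'M[C]_(m,n)) (B : 'M[C]_(n,p)) :
  adjmx (A *m B) = adjmx B *m adjmx A.
Proof. by rewrite /adjmx map_mxM trmx_mul. Qed.

Lemma adjmxK m n (A : 'M[C]_(m,n)) : adjmx (adjmx A) = A.
Proof. by apply/matrixP => i j; rewrite !mxE conjCK. Qed.

Lemma adjmxD m n (A B : 'M[C]_(m,n)) : adjmx (A + B) = adjmx A + adjmx B.
Proof. by apply/matrixP => i j; rewrite !mxE rmorphD. Qed.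

Lemma adjmxN m n (A : 'M[C]_(m,n)) : adjmx (- A) = - adjmx A.
Proof. by apply/matrixP => i j; rewrite !mxE rmorphN. Qed.

Lemma adjmxZ m n a (A : 'M[C]_(m,n)) : adjmx (a *: A) = a^* *: adjmx A.
Proof. by apply/matrixP => i j; rewrite !mxE rmorphM. Qed.

Lemma adjmx1 n : adjmx (1%:M : 'M[C]_n) = 1%:M.
Proof. by apply/matrixP => i j; rewrite !mxE eq_sym rmorph_nat. Qed.

Lemma adjmx_delta m n (i : 'I_m) (j : 'I_n) :
  adjmx (delta_mx i j : 'M[C]_(m,n)) = delta_mx j i.
Proof. by apply/matrixP => k l; rewrite !mxE rmorph_nat andbC. Qed.

Lemma tr_adj_ge0 m n (X : 'M[C]_(m,n)) : 0 <= \tr (X *m adjmx X).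
Proof.
rewrite /mxtrace; apply: sumr_ge0 => i _; rewrite mxE.
by apply: sumr_ge0 => j _; rewrite !mxE mul_conjC_ge0.
Qed.

Lemma tr_adj_eq0 m n (X : 'M[C]_(m,n)) : \tr (X *m adjmx X) = 0 -> X = 0.
Proof.
rewrite /mxtrace => H0.
have H1 : forall i, 0 <= (X *m adjmx X) i i.
  by move=> i; rewrite mxE; apply: sumr_ge0 => l _; rewrite !mxE mul_conjC_ge0.
have H := psumr_eq0P (fun i _ => H1 i) H0.
apply/matrixP => i j.
have := H i isT; rewrite mxE => H2.
have H3 : forall k, 0 <= X i k * (adjmx X) k i.
  by move=> k; rewrite !mxE mul_conjC_ge0.
have H4 := psumr_eq0P (fun k _ => H3 k) H2.
have /eqP := H4 j isT.
by rewrite !mxE mul_conjC_eq0 => /eqP ->.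
Qed.

Lemma adj_tstar m n (A : 'M[C]_(m,n)) : map_mx Num.conj (A^T) = adjmx A.
Proof. by rewrite /adjmx map_trmx. Qed.

Lemma tr_unitary_conj n (U M : 'M[C]_n) : U \is unitarymx ->
  \tr (adjmx U *m M *m U) = \tr M.
Proof.
move=> /unitarymxP; rewrite adj_tstar => HU.
by rewrite mxtrace_mulC mulmxA HU mul1mx.
Qed.

Lemma psd_spectral n (A : 'M[C]_n) : psd A ->
  exists U : 'M[C]_n, exists d : 'rV[C]_n,
    [/\ U \is unitarymx, forall i, 0 <= d 0 i & A = adjmx U *m diag_mx d *m U].
Proof.
move=> [HA Hq].
have Hn : A \is normalmx by apply/normalmxP; rewrite adj_tstar HA.
have /orthomx_spectralP HAe := Hn.
set U := spectralmx A in HAe; set d := spectral_diag A in HAe.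
have HU : U \is unitarymx by apply: spectral_unitarymx.
have HUU : U *m adjmx U = 1%:M by rewrite -adj_tstar; apply/unitarymxP.
rewrite invmx_unitary // adj_tstar in HAe.
exists U, d; split => // i.
have := Hq (adjmx U *m delta_mx i 0).
rewrite adjmxM adjmxK adjmx_delta HAe.
rewrite !mulmxA -(mulmxA _ U) HUU mulmx1 -(mulmxA _ U) HUU mulmx1.
by rewrite -colE -rowE !mxE eqxx mulr1n.
Qed.


Lemma unitary_UU n (U : 'M[C]_n) : U \is unitarymx -> U *m adjmx U = 1%:M.
Proof. by rewrite -adj_tstar => /unitarymxP. Qed.

Lemma diag_mul n (d e : 'rV[C]_n) :
  diag_mx d *m diag_mx e = diag_mx (\row_j (d 0 j * e 0 j)).
Proof. by rewrite mulmx_diag. Qed.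

Lemma psd_sqrt n (A : 'M[C]_n) : psd A ->
  exists S : 'M[C]_n, adjmx S = S /\ S *m S = A.
Proof.
move=> /psd_spectral [U [d [HU Hd ->]]].
have HUU := unitary_UU HU.
pose e : 'rV[C]_n := \row_j sqrtC (d 0 j).
exists (adjmx U *m diag_mx e *m U); split.
  rewrite !adjmxM adjmxK mulmxA; congr (_ *m _ *m _).
  apply/matrixP => i j; rewrite !mxE.
  rewrite rmorphMn eq_sym; case: eqP => [->|_]; last by rewrite !mulr0n.
  rewrite !mulr1n; apply: conj_Creal; apply: ger0_real.
  by rewrite sqrtC_ge0.
rewrite !mulmxA -(mulmxA _ U) HUU mulmx1 -(mulmxA (adjmx U)) diag_mul.
congr (_ *m diag_mx _ *m _); apply/rowP => j; rewrite !mxE.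
by rewrite -expr2 sqrtCK.
Qed.

Lemma psd_tr_mul n (A B : 'M[C]_n) : psd A -> psd B ->
  0 <= \tr (A *m B) /\ (\tr (A *m B) = 0 -> A *m B = 0).
Proof.
move=> /psd_sqrt [S [HS <-]] /psd_sqrt [T [HT <-]].
have E : \tr (S *m S *m (T *m T)) = \tr ((S *m T) *m adjmx (S *m T)).
  rewrite adjmxM HS HT -!mulmxA mxtrace_mulC -!mulmxA.
  by rewrite [T *m (T *m S)]mulmxA.
rewrite E; split; first exact: tr_adj_ge0.
move=> /tr_adj_eq0 H.
by rewrite -mulmxA (mulmxA S T T) mulmxA H mulmx0 mul0mx.
Qed.

Lemma density_pure n (A : 'M[C]_n) : psd A -> \tr A = 1 ->
  \tr (A *m A) <= 1 /\ (\tr (A *m A) = 1 -> A *m A = A).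
Proof.
move=> /psd_spectral [U [d [HU Hd ->]]].
have HUU := unitary_UU HU.
rewrite tr_unitary_conj // mxtrace_diag => Hs.
have -> : adjmx U *m diag_mx d *m U *m (adjmx U *m diag_mx d *m U)
   = adjmx U *m diag_mx (\row_j (d 0 j * d 0 j)) *m U.
  by rewrite !mulmxA -(mulmxA _ U) HUU mulmx1 -(mulmxA (adjmx U)) diag_mul.
rewrite tr_unitary_conj // mxtrace_diag.
have Hle : forall i, d 0 i <= 1.
  move=> i; rewrite -Hs (bigD1 i) //= lerDl; apply: sumr_ge0 => j _; exact: Hd.
have Hnn : forall i : 'I_n, 0 <= d 0 i * (1 - d 0 i).
  by move=> i; rewrite mulr_ge0 // subr_ge0.
have E : 1 - \sum_j (\row_j (d 0 j * d 0 j)) 0 j = \sum_j d 0 j * (1 - d 0 j).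
  rewrite -{1}Hs -sumrB; apply: eq_bigr => j _; rewrite !mxE.
  by rewrite mulrBr mulr1.
split.
  rewrite -subr_ge0 (_ : 1 - _ = \sum_j d 0 j * (1 - d 0 j)).
    by apply: sumr_ge0 => j _.
  exact: E.
move=> /eqP; rewrite eq_sym -subr_eq0 (_ : 1 - _ = \sum_j d 0 j * (1 - d 0 j)); last exact: E.
move=> /eqP H0.
have H := psumr_eq0P (fun j _ => Hnn j) H0.
congr (_ *m diag_mx _ *m _); apply/rowP => j; rewrite !mxE.
have := H j isT; rewrite mulrBr mulr1 => /eqP; rewrite subr_eq0 => /eqP.
by [].
Qed.

End LA.

Section TI.
Variable R : rcfType.
Local Notation C := R[i].

Lemma tr_tens m n (A : 'M[C]_m) (B : 'M[C]_n) : \tr (A *t B) = \tr A * \tr B.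
Proof. by rewrite /mxtrace mulr_sum; apply: eq_bigr => k _; rewrite mxE. Qed.

Lemma tr_delta n (k l : 'I_n) : \tr (delta_mx k l : 'M[C]_n) = (k == l)%:R.
Proof.
rewrite /mxtrace (bigD1 k) //= big1 ?addr0; last first.
  by move=> i /negbTE Hik; rewrite mxE Hik.
by rewrite mxE eqxx.
Qed.

Lemma tr_tens_id n (L : 'M[C]_2 -> 'M[C]_2) (X : 'M[C]_(2 * n)) :
  (forall Y, \tr (L Y) = \tr Y) -> \tr (tens_id L X) = \tr X.
Proof.
move=> HL; rewrite /tens_id raddf_sum /=.
rewrite (eq_bigr (fun k => \tr (\matrix_(i, j) X (mxtens_index (i, k)) (mxtens_index (j, k)) : 'M[C]_2))); last first.
  move=> k _; rewrite raddf_sum /= (bigD1 k) //= big1 ?addr0.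
    by rewrite tr_tens tr_delta eqxx mulr1 HL.
  by move=> l /negbTE Hl; rewrite tr_tens tr_delta eq_sym Hl mulr0.
rewrite [RHS]/mxtrace (reindex (@mxtens_index 2 n)) /=; last first.
  by exists (@mxtens_unindex 2 n) => p _; rewrite (mxtens_indexK, mxtens_unindexK).
transitivity (\sum_(i < 2) \sum_(k < n) X (mxtens_index (i,k)) (mxtens_index (i,k))).
  rewrite exchange_big; apply: eq_bigr => k _.
  by rewrite /mxtrace; apply: eq_bigr => i _; rewrite mxE.
by rewrite pair_bigA; apply: eq_bigr => [[i k]] _.
Qed.

End TI.

Definition o0 : 'I_3 := @Ordinal 3 0 isT.
Definition o1 : 'I_3 := @Ordinal 3 1 isT.
Definition o2 : 'I_3 := @Ordinal 3 2 isT.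

Lemma b3E a b c (i : 'I_3) : b3 a b c i = nth false [:: a; b; c] i.
Proof. by rewrite ffunE. Qed.

Lemma bits_ind (P : bits -> Prop) : (forall a b c, P (b3 a b c)) -> forall x, P x.
Proof.
move=> H x; suff -> : x = b3 (x o0) (x o1) (x o2) by apply: H.
apply/ffunP => i; rewrite ffunE; case: i => [[|[|[|//]]] Hi] /=;
  by congr (x _); apply: val_inj.
Qed.

Lemma parity_b3 a b c : parity (b3 a b c) = addb a (addb b c).
Proof. by rewrite /parity !big_ord_recr big_ord0 /= !ffunE /=; case: a; case: b; case: c. Qed.

Lemma compl_b3 a b c : compl (b3 a b c) = b3 (~~ a) (~~ b) (~~ c).
Proof. by apply/ffunP => i; rewrite !ffunE; case: i => [[|[|[|//]]] Hi]. Qed.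

Lemma eq_b3 a b c a' b' c' :
  (b3 a b c == b3 a' b' c') = [&& a == a', b == b' & c == c'].
Proof.
apply/eqP/and3P => [H|[/eqP -> /eqP -> /eqP ->]] //.
have := congr1 (fun f : bits => f o0) H; have := congr1 (fun f : bits => f o1) H.
have := congr1 (fun f : bits => f o2) H; rewrite !ffunE /= => -> -> ->.
by split.
Qed.

Lemma sum_bits (V : nmodType) (F : bits -> V) :
  \sum_(x : bits) F x = \sum_(a : bool) \sum_(b : bool) \sum_(c : bool) F (b3 a b c).
Proof.
rewrite (reindex (fun t : bool * bool * bool => b3 t.1.1 t.1.2 t.2)) /=; last first.
  exists (fun x : bits => (x o0, x o1, x o2)) => [[[a b] c] _|x _] /=.
    by rewrite !ffunE.
  by apply/ffunP => i; rewrite ffunE; case: i => [[|[|[|//]]] Hi] /=;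
    congr (x _); apply: val_inj.
by rewrite [RHS]pair_bigA [RHS]pair_bigA.
Qed.


Lemma comb (x x' : bits) : parity x != parity x' -> x' != compl x ->
  exists y0 : 'I_3, forall z : bits,
    ((parity z == ~~ parity x) && (z y0 != x y0)) = ((z == x') || (z == compl x)).
Proof.
move: x x'; apply: bits_ind => a b c; apply: bits_ind => a' b' c'.
rewrite !parity_b3 compl_b3 eq_b3.
case: a; case: b; case: c; case: a'; case: b'; case: c' => //= _ _;
  solve [ exists o0; apply: bits_ind => d e f; rewrite parity_b3 !eq_b3 !ffunE /=;
          by case: d; case: e; case: f
        | exists o1; apply: bits_ind => d e f; rewrite parity_b3 !eq_b3 !ffunE /=;
          by case: d; case: e; case: f
        | exists o2; apply: bits_ind => d e f; rewrite parity_b3 !eq_b3 !ffunE /=;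
          by case: d; case: e; case: f ].
Qed.

Section Coef.
Variable R : rcfType.
Local Notation C := R[i].

Definition sg (y : 'I_3) (x : bits) : C := if x y then -1 else 1.
Definition pp (x : bits) : C := if parity x then -1 else 1.

Lemma coefE (x x' : bits) :
  \sum_(y < 3) sg y x * sg y x' =
  4 * (x == x')%:R - pp x * pp x' - 4 * (compl x == x')%:R.
Proof.
move: x x'; apply: bits_ind => a b c; apply: bits_ind => a' b' c'.
rewrite compl_b3 !eq_b3 /pp !parity_b3 /sg !big_ord_recr big_ord0 /= !ffunE /=.
by case: a; case: b; case: c; case: a'; case: b'; case: c'; rewrite /=; ring.
Qed.

End Coef.

Section GR.
Variable R : rcfType.
Local Notation C := R[i].

Lemma ortho_group n (I : finType) (Pr : pred I) (F : I -> 'M[C]_n) :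
  (forall i, Pr i -> psd (F i)) -> (forall i, Pr i -> \tr (F i) = 1) ->
  (forall i, Pr i -> F i *m F i = F i) -> \sum_(i | Pr i) F i = 1%:M ->
  forall i j, Pr i -> Pr j -> i != j -> F i *m F j = 0.
Proof.
move=> Hp Ht Hid Hs i j Pi Pj nij.
have E : \tr (F i) = \tr (F i *m F i) + \sum_(k | Pr k && (k != i)) \tr (F i *m F k).
  by rewrite -{1}(mulmx1 (F i)) -Hs mulmx_sumr raddf_sum /= (bigD1 i).
have Hz : \sum_(k | Pr k && (k != i)) \tr (F i *m F k) = 0.
  by apply: (@addrI _ (\tr (F i))); rewrite addr0 {2}E Hid.
have Hnn : forall k, Pr k && (k != i) -> 0 <= \tr (F i *m F k).
  by move=> k /andP [Pk _]; exact: (psd_tr_mul (Hp i Pi) (Hp k Pk)).1.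
have := psumr_eq0P Hnn Hz; move=> /(_ j); rewrite Pj eq_sym nij => /(_ isT).
exact: (psd_tr_mul (Hp i Pi) (Hp j Pj)).2.
Qed.

Lemma group_mul_l n (I : finType) (Pr : pred I) (F : I -> 'M[C]_n) (a : I -> C) w :
  (forall i j, Pr i -> Pr j -> i != j -> F i *m F j = 0) ->
  (forall i, Pr i -> F i *m F i = F i) -> Pr w ->
  F w *m (\sum_(z | Pr z) a z *: F z) = a w *: F w.
Proof.
move=> Ho Hid Pw; rewrite mulmx_sumr (bigD1 w) //= big1 ?addr0.
  by rewrite -scalemxAr Hid.
by move=> z /andP [Pz nz]; rewrite -scalemxAr Ho ?scaler0 // eq_sym.
Qed.

Lemma group_mul_r n (I : finType) (Pr : pred I) (F : I -> 'M[C]_n) (a : I -> C) w :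
  (forall i j, Pr i -> Pr j -> i != j -> F i *m F j = 0) ->
  (forall i, Pr i -> F i *m F i = F i) -> Pr w ->
  (\sum_(z | Pr z) a z *: F z) *m F w = a w *: F w.
Proof.
move=> Ho Hid Pw; rewrite mulmx_suml (bigD1 w) //= big1 ?addr0.
  by rewrite -scalemxAl Hid.
by move=> z /andP [Pz nz]; rewrite -scalemxAl Ho ?scaler0.
Qed.

Lemma group_sq n (I : finType) (Pr : pred I) (F : I -> 'M[C]_n) (a : I -> C) :
  (forall i j, Pr i -> Pr j -> i != j -> F i *m F j = 0) ->
  (forall i, Pr i -> F i *m F i = F i) ->
  (\sum_(z | Pr z) a z *: F z) *m (\sum_(z | Pr z) a z *: F z)
  = \sum_(z | Pr z) (a z * a z) *: F z.
Proof.
move=> Ho Hid; rewrite mulmx_suml; apply: eq_bigr => z Pz.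
by rewrite -scalemxAl group_mul_l // scalerA.
Qed.

Lemma adjmx_sum m n (I : finType) (P : pred I) (F : I -> 'M[C]_(m,n)) :
  adjmx (\sum_(i | P i) F i) = \sum_(i | P i) adjmx (F i).
Proof.
apply/matrixP => i j; rewrite !mxE !summxE rmorph_sum; apply: eq_bigr => k _.
by rewrite !mxE.
Qed.

Lemma sum_pick (I : finType) (V : lmodType C) (a : I) (f : I -> V) :
  \sum_(x : I) ((a == x)%:R : C) *: f x = f a.
Proof.
rewrite (bigD1 a) //= eqxx scale1r big1 ?addr0 //.
by move=> x /negbTE; rewrite eq_sym => ->; rewrite scale0r.
Qed.

End GR.

Section Core.
Variable R : rcfType.
Local Notation C := R[i].
Variable r : bits -> 'M[C]_(2*2).
Variable Pi : 'I_3 -> bool -> 'M[C]_(2*2).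
Hypothesis Hpsd : forall x, psd (r x).
Hypothesis Htr : forall x, \tr (r x) = 1.
Hypothesis HPi : forall y, proj_meas (Pi y false) (Pi y true).

Definition Bo y := Pi y false - Pi y true.
Definition Do y := \sum_(x : bits) sg R y x *: r x.
Definition Pm := \sum_(x : bits) pp R x *: r x.

Lemma Pi_B y b : Pi y b = 2^-1 *: (1%:M + (if b then -1 else 1) *: Bo y).
Proof.
case: (HPi y) => h0 i0 h1 i1 hs; rewrite /Bo.
apply/matrixP => i j; move: (congr1 (fun M : 'M[C]_(2*2) => M i j) hs); rewrite !mxE => <-.
have H2 : (2 : C) != 0 by rewrite pnatr_eq0.
by case: b; rewrite ?mxE; field.
Qed.

Lemma B_herm y : adjmx (Bo y) = Bo y.
Proof. by case: (HPi y) => h0 i0 h1 i1 hs; rewrite /Bo adjmxD adjmxN h0 h1. Qed.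

Lemma B_sq y : Bo y *m Bo y = 1%:M.
Proof.
case: (HPi y) => h0 i0 h1 i1 hs.
have E1 : Pi y true = 1%:M - Pi y false by rewrite -hs [Pi y false + _]addrC addrK.
have h01 : Pi y false *m Pi y true = 0 by rewrite E1 mulmxBr mulmx1 i0 subrr.
have h10 : Pi y true *m Pi y false = 0 by rewrite E1 mulmxBl mul1mx i0 subrr.
by rewrite /Bo mulmxBl !mulmxBr i0 i1 h01 h10 subr0 sub0r opprK.
Qed.

Lemma sg_conj y x : (sg R y x)^* = sg R y x.
Proof. by rewrite /sg; case: (x y); rewrite ?rmorphN rmorph1. Qed.

Lemma pp_conj x : (pp R x)^* = pp R x.
Proof. by rewrite /pp; case: (parity x); rewrite ?rmorphN rmorph1. Qed.

Lemma sg_sq y x : sg R y x * sg R y x = 1.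
Proof. by rewrite /sg; case: (x y); rewrite ?mulrNN mulr1. Qed.

Lemma D_herm y : adjmx (Do y) = Do y.
Proof.
rewrite /Do adjmx_sum; apply: eq_bigr => x _.
by rewrite adjmxZ sg_conj (Hpsd x).1.
Qed.

Lemma Pm_herm : adjmx Pm = Pm.
Proof.
rewrite /Pm adjmx_sum; apply: eq_bigr => x _.
by rewrite adjmxZ pp_conj (Hpsd x).1.
Qed.

Lemma card_bits : #|{: bits}| = 8%N.
Proof. by rewrite card_ffun card_bool card_ord. Qed.

Lemma success_E : success r Pi = 2^-1 + 48^-1 * \sum_(y < 3) \tr (Do y *m Bo y).
Proof.
have E1 : forall y, \sum_(x : bits) \tr (r x *m Pi y (x y))
                  = 4 + 2^-1 * \tr (Do y *m Bo y).
  move=> y.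
  have E2 : forall x : bits, \tr (r x *m Pi y (x y))
                  = 2^-1 + 2^-1 * (sg R y x * \tr (r x *m Bo y)).
    move=> x; rewrite Pi_B -scalemxAr mxtraceZ mulmxDr mulmx1 mxtraceD Htr.
    by rewrite -scalemxAr mxtraceZ /sg mulrDr mulr1.
  rewrite (eq_bigr _ (fun x _ => E2 x)) big_split /= sumr_const card_bits.
  rewrite -mulr_sumr /Do mulmx_suml raddf_sum /=.
  have H2 : (2 : C) != 0 by rewrite pnatr_eq0.
  congr (_ + _ * _); last first.
    by apply: eq_bigr => x _; rewrite -scalemxAl mxtraceZ.
  by rewrite -mulr_natr; field.
rewrite /success (eq_bigr _ (fun y _ => E1 y)) big_split /= sumr_const card_ord.
rewrite -mulr_sumr.
have H2 : (2 : C) != 0 by rewrite pnatr_eq0.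
have H3 : (24 : C) != 0 by rewrite pnatr_eq0.
have H4 : (48 : C) != 0 by rewrite pnatr_eq0.
by rewrite -mulr_natr; field.
Qed.

Lemma sq_expand (a : bits -> C) :
  (\sum_(x : bits) a x *: r x) *m (\sum_(x : bits) a x *: r x)
  = \sum_(x : bits) \sum_(x' : bits) (a x * a x') *: (r x *m r x').
Proof.
rewrite mulmx_suml; apply: eq_bigr => x _; rewrite -scalemxAl mulmx_sumr scaler_sumr.
by apply: eq_bigr => x' _; rewrite -scalemxAr scalerA.
Qed.

Lemma DD_identity :
  \sum_(y < 3) Do y *m Do y =
  4 *: \sum_(x : bits) r x *m r x - Pm *m Pm - 4 *: \sum_(x : bits) r x *m r (compl x).
Proof.
rewrite /Do (eq_bigr _ (fun y _ => sq_expand (sg R y))).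
rewrite exchange_big /=.
rewrite (eq_bigr (fun x => \sum_(x' : bits) (4 * (x == x')%:R - pp R x * pp R x'
      - 4 * (compl x == x')%:R) *: (r x *m r x'))); last first.
  move=> x _; rewrite exchange_big; apply: eq_bigr => x' _.
  by rewrite -scaler_suml coefE.
rewrite /Pm sq_expand !scaler_sumr -!sumrB; apply: eq_bigr => x _.
rewrite -(sum_pick x (fun x' => r x *m r x')) -(sum_pick (compl x) (fun x' => r x *m r x')).
rewrite !scaler_sumr -!sumrB; apply: eq_bigr => x' _.
by rewrite !scalerA !scalerBl.
Qed.


Lemma sum3 (V : nmodType) (F : 'I_3 -> V) : \sum_(y < 3) F y = F o0 + F o1 + F o2.
Proof.
rewrite !big_ord_recl big_ord0 addr0 addrA.
by congr (F _ + F _ + F _); apply: val_inj.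
Qed.

Lemma tr_sq_expand n (X Y : 'M[C]_n) a :
  \tr ((X - a *: Y) *m (X - a *: Y))
  = \tr (X *m X) - 2 * a * \tr (Y *m X) + a * a * \tr (Y *m Y).
Proof.
rewrite mulmxBl !mulmxBr -!scalemxAl -!scalemxAr !raddfB /= !mxtraceZ.
rewrite [\tr (X *m Y)]mxtrace_mulC; ring.
Qed.

Lemma alg_step (c t0 t1 t2 d0 d1 d2 u v w : C) :
  c * (t0 + t1 + t2) = 12 -> c * c = 3 / 8 ->
  d0 + d1 + d2 = 4 * (8 - u) - v - 4 * w ->
  (4 - 2 * c * t0 + c * c * d0) + (4 - 2 * c * t1 + c * c * d1)
    + (4 - 2 * c * t2 + c * c * d2)
  + 3 / 2 * u + 3 / 8 * v + 3 / 2 * w = 0.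
Proof.
move=> h1 h2 h3.
have -> : (4 - 2 * c * t0 + c * c * d0) + (4 - 2 * c * t1 + c * c * d1)
    + (4 - 2 * c * t2 + c * c * d2) + 3 / 2 * u + 3 / 8 * v + 3 / 2 * w
  = 12 - 2 * (c * (t0 + t1 + t2)) + (c * c) * (d0 + d1 + d2)
    + 3 / 2 * u + 3 / 8 * v + 3 / 2 * w by ring.
rewrite h1 h2 h3.
have H2 : (2 : C) != 0 by rewrite pnatr_eq0.
have H8 : (8 : C) != 0 by rewrite pnatr_eq0.
by field.
Qed.

Definition cc : C := sqrtC (3 / 8).

Lemma cc_sq : cc * cc = 3 / 8.
Proof. by rewrite /cc -expr2 sqrtCK. Qed.

Lemma cc_T : cc * (48 * (sqrtC 6)^-1) = 12.
Proof.
have H6 : sqrtC 6 != 0 :> C by rewrite sqrtC_eq0 pnatr_eq0.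
have E : cc * sqrtC 6 = 3 / 2.
  rewrite /cc -sqrtCM ?qualifE /=; last by [].
  - have -> : (3 / 8 * 6 : C) = (3 / 2) ^+ 2.
      have H2 : (2 : C) != 0 by rewrite pnatr_eq0.
      have H8 : (8 : C) != 0 by rewrite pnatr_eq0.
      by field.
    by rewrite sqrCK // divr_ge0 // ler0n.
  by rewrite divr_ge0 // ler0n.
have H6' : (6 : C) != 0 by rewrite pnatr_eq0.
have Hi : (sqrtC 6)^-1 = sqrtC 6 / 6 :> C.
  apply: (mulfI H6); rewrite mulfV // mulrA -expr2 sqrtCK mulfV //.
rewrite Hi.
have -> : cc * (48 * (sqrtC 6 / 6)) = 8 * (cc * sqrtC 6) by field.
rewrite E.
have H2 : (2 : C) != 0 by rewrite pnatr_eq0.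
by field.
Qed.


Hypothesis HT : \sum_(y < 3) \tr (Do y *m Bo y) = 48 * (sqrtC 6)^-1.

Lemma main_eq :
  \sum_(y < 3) \tr ((Bo y - cc *: Do y) *m (Bo y - cc *: Do y))
  + 3 / 2 * \sum_(x : bits) (1 - \tr (r x *m r x)) + 3 / 8 * \tr (Pm *m Pm)
  + 3 / 2 * \sum_(x : bits) \tr (r x *m r (compl x)) = 0.
Proof.
have Dsum : \sum_(y < 3) \tr (Do y *m Do y) =
   4 * (8 - \sum_(x : bits) (1 - \tr (r x *m r x))) - \tr (Pm *m Pm)
   - 4 * \sum_(x : bits) \tr (r x *m r (compl x)).
  have trs : forall F : bits -> 'M[C]_(2*2), \tr (\sum_x F x) = \sum_x \tr (F x).
    by move=> F; rewrite raddf_sum.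
  rewrite -raddf_sum DD_identity !raddfB /= !mxtraceZ !trs.
  congr (4 * _ - _ - _).
  by rewrite sumrB sumr_const card_bits opprB addrC subrK.
have HT3 := HT; rewrite sum3 in Dsum; rewrite sum3 in HT3.
rewrite sum3 !tr_sq_expand !B_sq mxtrace1.
apply: alg_step; [by rewrite HT3 cc_T | exact: cc_sq | exact: Dsum].
Qed.


Lemma sum4_eq0 (a b c d : C) : 0 <= a -> 0 <= b -> 0 <= c -> 0 <= d ->
  a + b + c + d = 0 -> [/\ a = 0, b = 0, c = 0 & d = 0].
Proof.
move=> ha hb hc hd /eqP.
rewrite paddr_eq0 ?addr_ge0 // => /andP [/eqP].
move=> /eqP; rewrite paddr_eq0 ?addr_ge0 // => /andP [/eqP].
move=> /eqP; rewrite paddr_eq0 // => /andP [/eqP -> /eqP ->] /eqP -> /eqP ->.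
by [].
Qed.

Lemma cc_conj : cc^* = cc.
Proof. by apply: conj_Creal; apply: ger0_real; rewrite sqrtC_ge0 divr_ge0 // ler0n. Qed.

Lemma zero_parts :
  [/\ forall y, Bo y = cc *: Do y, forall x, \tr (r x *m r x) = 1, Pm = 0
    & forall x, \tr (r x *m r (compl x)) = 0].
Proof.
have Hh : forall y, adjmx (Bo y - cc *: Do y) = Bo y - cc *: Do y.
  by move=> y; rewrite adjmxD adjmxN adjmxZ cc_conj B_herm D_herm.
have hH : forall y, 0 <= \tr ((Bo y - cc *: Do y) *m (Bo y - cc *: Do y)).
  by move=> y; have := tr_adj_ge0 (Bo y - cc *: Do y); rewrite Hh.
have hu : forall x, 0 <= 1 - \tr (r x *m r x).
  by move=> x; rewrite subr_ge0; exact: (density_pure (Hpsd x) (Htr x)).1.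
have hv : 0 <= \tr (Pm *m Pm) by have := tr_adj_ge0 Pm; rewrite Pm_herm.
have hw : forall x, 0 <= \tr (r x *m r (compl x)).
  by move=> x; exact: (psd_tr_mul (Hpsd x) (Hpsd (compl x))).1.
have c32 : 0 <= 3 / 2 :> C by rewrite divr_ge0 // ler0n.
have c38 : 0 <= 3 / 8 :> C by rewrite divr_ge0 // ler0n.
have c32n : 3 / 2 != 0 :> C by rewrite mulf_eq0 invr_eq0 !pnatr_eq0.
have c38n : 3 / 8 != 0 :> C by rewrite mulf_eq0 invr_eq0 !pnatr_eq0.
have [e1 e2 e3 e4] := sum4_eq0 (sumr_ge0 _ (fun y _ => hH y))
  (mulr_ge0 c32 (sumr_ge0 _ (fun x _ => hu x))) (mulr_ge0 c38 hv)
  (mulr_ge0 c32 (sumr_ge0 _ (fun x _ => hw x))) main_eq.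
move: e2 e3 e4 => /eqP; rewrite mulf_eq0 (negbTE c32n) /= => /eqP e2.
move=> /eqP; rewrite mulf_eq0 (negbTE c38n) /= => /eqP e3.
move=> /eqP; rewrite mulf_eq0 (negbTE c32n) /= => /eqP e4.
split.
- move=> y; have P1 := psumr_eq0P (fun y _ => hH y) e1; have := P1 y isT.
  rewrite -{2}Hh => /tr_adj_eq0 /eqP; rewrite subr_eq0 => /eqP //.
- move=> x; have P2 := psumr_eq0P (fun x _ => hu x) e2; have := P2 x isT.
  by move=> /eqP; rewrite subr_eq0 => /eqP <-.
- by apply: tr_adj_eq0; rewrite Pm_herm.
- by move=> x; have P4 := psumr_eq0P (fun x _ => hw x) e4; exact: P4 x isT.
Qed.


Definition Ps p := \sum_(x : bits | parity x == p) r x.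

Lemma r_idem x : r x *m r x = r x.
Proof.
have [_ h _ _] := zero_parts.
exact: (density_pure (Hpsd x) (Htr x)).2 (h x).
Qed.

Lemma r_compl0 x : r x *m r (compl x) = 0.
Proof.
have [_ _ _ h] := zero_parts.
exact: (psd_tr_mul (Hpsd x) (Hpsd (compl x))).2 (h x).
Qed.

Lemma DD_const y : Do y *m Do y = (8 / 3) *: 1%:M.
Proof.
have [h _ _ _] := zero_parts.
have := B_sq y; rewrite h -scalemxAl -scalemxAr scalerA cc_sq => <-.
rewrite scalerA (_ : 8 / 3 * (3 / 8) = 1 :> C) ?scale1r //.
have H3 : (3 : C) != 0 by rewrite pnatr_eq0.
have H8 : (8 : C) != 0 by rewrite pnatr_eq0.
by field.
Qed.

Lemma sum_r : \sum_(x : bits) r x = 2 *: 1%:M.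
Proof.
have [_ _ h0 _] := zero_parts.
have := DD_identity.
rewrite (eq_bigr _ (fun y _ => DD_const y)) sum3 h0 mulmx0 subr0.
rewrite (eq_bigr _ (fun x _ => r_idem x)) (eq_bigr _ (fun x _ => r_compl0 x)).
rewrite big1_eq scaler0 subr0 => E.
have -> : \sum_x r x = 4^-1 *: (4 *: \sum_x r x).
  by rewrite scalerA mulVf ?scale1r // pnatr_eq0.
rewrite -E -!scalerDl scalerA; congr (_ *: _).
have H3 : (3 : C) != 0 by rewrite pnatr_eq0.
have H4 : (4 : C) != 0 by rewrite pnatr_eq0.
by field.
Qed.

Lemma Ps_split : \sum_(x : bits) r x = Ps false + Ps true.
Proof.
rewrite (bigID (fun x => parity x)) /= addrC /Ps; congr (_ + _).
  by apply: eq_bigl => x; rewrite eqbF_neg.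
by apply: eq_bigl => x; rewrite eqb_id.
Qed.

Lemma Pm_split : Pm = Ps false - Ps true.
Proof.
rewrite /Pm (bigID (fun x => parity x)) /= addrC /Ps; congr (_ + _).
  rewrite (eq_bigl (fun x => parity x == false)); last by move=> x; rewrite eqbF_neg.
  by apply: eq_bigr => x /eqP; rewrite /pp => ->; rewrite scale1r.
rewrite -sumrN (eq_bigl (fun x => parity x == true)); last by move=> x; rewrite eqb_id.
by apply: eq_bigr => x /eqP; rewrite /pp => ->; rewrite scaleN1r.
Qed.

Lemma Ps1 p : Ps p = 1%:M.
Proof.
have [_ _ h0 _] := zero_parts.
have Heq : Ps false = Ps true by apply/eqP; rewrite -subr_eq0 -Pm_split h0.
have H2 : (2 : C) != 0 by rewrite pnatr_eq0.
have Hf : Ps false = 1%:M.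
  apply: (scalerI H2); rewrite -sum_r Ps_split -Heq.
  by rewrite scaler_nat mulr2n.
by case: p; rewrite // -Heq.
Qed.

Lemma ortho p x x' : parity x = p -> parity x' = p -> x != x' -> r x *m r x' = 0.
Proof.
move=> hx hx' nxx'.
apply: (ortho_group (fun i _ => Hpsd i) (fun i _ => Htr i) (fun i _ => r_idem i)
   (Ps1 p : \sum_(x : bits | parity x == p) r x = 1%:M)) => //.
- by rewrite hx.
- by rewrite hx'.
Qed.


Lemma sum_pickC (a : bits) (f : bits -> C) : \sum_(z : bits) (a == z)%:R * f z = f a.
Proof.
rewrite (bigD1 a) //= eqxx mul1r big1 ?addr0 //.
by move=> z /negbTE; rewrite eq_sym => ->; rewrite mul0r.
Qed.

Lemma third x x' : parity x != parity x' -> x' != compl x ->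
  \tr (r x *m r x') = 3^-1.
Proof.
move=> hp hc.
set p := parity x.
pose Pr := fun z : bits => parity z == p.
pose Pr' := fun z : bits => parity z == ~~ p.
have Ho : forall i j, Pr i -> Pr j -> i != j -> r i *m r j = 0.
  by move=> i j /eqP hi /eqP hj; apply: (ortho (p := p)) => //; rewrite hi.
have Ho' : forall i j, Pr' i -> Pr' j -> i != j -> r i *m r j = 0.
  by move=> i j /eqP hi /eqP hj; apply: (ortho (p := ~~ p)) => //; rewrite hi.
have Hid : forall i, Pr i -> r i *m r i = r i by move=> i _; exact: r_idem.
have Hid' : forall i, Pr' i -> r i *m r i = r i by move=> i _; exact: r_idem.
have Px : Pr x by rewrite /Pr.
pose E y := \sum_(z | Pr z) sg R y z *: r z.
pose F y := \sum_(z | Pr' z) sg R y z *: r z.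
have DEF : forall y, Do y = E y + F y.
  move=> y; rewrite /Do (bigID Pr) /=; congr (_ + _).
  have nb : forall a b : bool, ~~ (a == b) = (a == ~~ b) by do 2 case.
  by apply: eq_bigl => z; rewrite /Pr /Pr' nb.
have FF : forall y, F y *m F y = 1%:M.
  move=> y; rewrite /F group_sq //.
  rewrite (eq_bigr (fun z => r z)); last by move=> z _; rewrite sg_sq scale1r.
  exact: (Ps1 (~~ p)).
have key : forall y, sg R y x * \tr (r x *m F y) = 3^-1.
  move=> y.
  have h1 : \tr (r x *m Do y *m Do y) = 8 / 3.
    by rewrite -mulmxA DD_const -scalemxAr mulmx1 mxtraceZ Htr mulr1.
  have h2 : \tr (r x *m Do y *m Do y) = 2 + 2 * (sg R y x * \tr (r x *m F y)).
    have e1 : r x *m E y = sg R y x *: r x := group_mul_l _ Ho Hid Px.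
    have e2 : E y *m r x = sg R y x *: r x := group_mul_r _ Ho Hid Px.
    have sq : (E y + F y) *m (E y + F y)
        = E y *m E y + E y *m F y + (F y *m E y + F y *m F y).
      by rewrite mulmxDl !mulmxDr.
    rewrite DEF -mulmxA sq !mulmxDr !mxtraceD FF mulmx1 Htr.
    rewrite !mulmxA e1 -!scalemxAl e1 scalerA sg_sq scale1r Htr mxtraceZ.
    rewrite (mxtrace_mulC (r x *m F y)) mulmxA e2 -scalemxAl mxtraceZ.
    ring.
  move: h1; rewrite h2 => h.
  have H2 : (2 : C) != 0 by rewrite pnatr_eq0.
  have H3 : (3 : C) != 0 by rewrite pnatr_eq0.
  have -> : sg R y x * \tr (r x *m F y) = ((2 + 2 * (sg R y x * \tr (r x *m F y))) - 2) / 2.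
    by field.
  by rewrite h; field.
have [y0 Hy0] := comb hp hc.
pose q z := \tr (r x *m r z).
have trF : \tr (r x *m F y0) = \sum_(z | Pr' z) sg R y0 z * q z.
  rewrite /F mulmx_sumr raddf_sum; apply: eq_bigr => z _.
  by rewrite /= -scalemxAr mxtraceZ.
have sumq : \sum_(z | Pr' z) q z = 1.
  rewrite /q -raddf_sum -mulmx_sumr (Ps1 (~~ p) : \sum_(z | Pr' z) r z = 1%:M).
  by rewrite mulmx1 /= Htr.
have qc : q (compl x) = 0 by have [_ _ _ h] := zero_parts; exact: h.
have sgE : forall z, sg R y0 x * sg R y0 z = 1 - 2 * (z y0 != x y0)%:R.
  by move=> z; rewrite /sg; case: (z y0); case: (x y0) => /=; ring.
have := key y0; rewrite trF mulr_sumr.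
rewrite (eq_bigr (fun z => q z - 2 * ((Pr' z && (z y0 != x y0))%:R * q z))); last first.
  move=> z Pz; rewrite mulrA sgE Pz /=; ring.
rewrite sumrB sumq -mulr_sumr big_mkcond /=.
rewrite (eq_bigr (fun z => (x' == z)%:R * q z + (compl x == z)%:R * q z)); last first.
  move=> z _.
  have -> : (if Pr' z then (Pr' z && (z y0 != x y0))%:R * q z else 0)
      = (Pr' z && (z y0 != x y0))%:R * q z by case: (Pr' z); rewrite ?mul0r.
  rewrite /Pr' /p Hy0 -mulrDl; congr (_ * _).
  have [->|nz] := eqVneq z x'; first by rewrite /= eq_sym (negbTE hc) addr0.
  by rewrite /= add0r eq_sym.
rewrite big_split /= !sum_pickC qc addr0 => h.
have H2 : (2 : C) != 0 by rewrite pnatr_eq0.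
have H3 : (3 : C) != 0 by rewrite pnatr_eq0.
have -> : \tr (r x *m r x') = (1 - (1 - 2 * q x')) / 2 by rewrite /q; field.
by rewrite h; field.
Qed.


Lemma lin_y0 (A B C0 D E F G H : 'M[C]_(2*2)) :
 -1 *: A + -1 *: B + (-1 *: C0 + -1 *: D) + (1 *: E + 1 *: F + (1 *: G + 1 *: H)) =
  G + F - D - A - (- H - E + C0 + B).
Proof. by apply/matrixP => i j; rewrite !mxE; ring. Qed.

Lemma lin_y1 (A B C0 D E F G H : 'M[C]_(2*2)) :
 -1 *: A + -1 *: B + (1 *: C0 + 1 *: D) + (-1 *: E + -1 *: F + (1 *: G + 1 *: H)) =
  G - F + D - A - (- H + E - C0 + B).
Proof. by apply/matrixP => i j; rewrite !mxE; ring. Qed.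

Lemma lin_y2 (A B C0 D E F G H : 'M[C]_(2*2)) :
 -1 *: A + 1 *: B + (-1 *: C0 + 1 *: D) + (-1 *: E + 1 *: F + (-1 *: G + 1 *: H)) =
  - G + F + D - A - (- H + E + C0 - B).
Proof. by apply/matrixP => i j; rewrite !mxE; ring. Qed.

Lemma D_NM y : Do y = Nop r y - Mop r y.
Proof.
rewrite /Do sum_bits !big_bool /=.
case: y => [[|[|[|//]]] Hy]; rewrite /sg !ffunE /Nop /Mop /=.
- exact: lin_y0.
- exact: lin_y1.
- exact: lin_y2.
Qed.

End Core.

Theorem theorem1 (R : rcfType) (rho : 'M[R[i]]_(2 * 2))
  (Lam : bits -> {linear 'M[R[i]]_2 -> 'M[R[i]]_2})
  (Pi : 'I_3 -> bool -> 'M[R[i]]_(2 * 2)) :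
  density rho ->
  (forall x, CPTP (Lam x)) ->
  (forall y, proj_meas (Pi y false) (Pi y true)) ->
  let rx := fun x : bits => tens_id (Lam x) rho in
  success rx Pi = 2^-1 + (sqrtC 6)^-1 ->
  [/\ (forall p : bool,
         (forall x x' : bits, parity x = p -> parity x' = p -> x != x' ->
            rx x *m rx x' = 0)
         /\ \sum_(x : bits | parity x == p) rx x = 1%:M),
      (forall x : bits, \tr (rx x *m rx (compl x)) = 0),
      (forall x x' : bits, parity x != parity x' -> x' != compl x ->
         \tr (rx x *m rx x') = 3^-1)
    & (forall y : 'I_3,
         Pi y false - Pi y true = sqrtC (3 / 8) *: (Nop rx y - Mop rx y))].
Proof.
move=> [Hrho Htrho] Hcp HPi rx Hs.
have Hpsd : forall x, psd (rx x).
  by move=> x; exact: (Hcp x).1 2 rho Hrho.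
have Htr : forall x, \tr (rx x) = 1.
  by move=> x; rewrite /rx tr_tens_id // => Y; exact: (Hcp x).2.
have HT : \sum_(y < 3) \tr (Do rx y *m Bo Pi y) = 48 * (sqrtC 6)^-1.
  move: Hs; rewrite (success_E Htr HPi) => /addrI H.
  have H48 : (48 : R[i]) != 0 by rewrite pnatr_eq0.
  by rewrite -H; field.
have [Z1 _ _ Z4] := zero_parts Hpsd Htr HPi HT.
split.
- move=> p; split.
    by move=> x x' hx hx' nx; exact: (ortho Hpsd Htr HPi HT hx hx' nx).
  exact: (Ps1 Hpsd Htr HPi HT p).
- exact: Z4.
- by move=> x x' h1 h2; exact: (third Hpsd Htr HPi HT h1 h2).
- by move=> y; rewrite -D_NM; exact: Z1 y.
Qed.
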